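(* Fix $\lambda_p,\lambda_s\in(0,1)$ and $p_q\in(0,1)$, and consider $p_a\in[0,1]$ ranging over values for which $(\lambda_p,\lambda_s)$ is in the stable region, i.e. $\lambda_p<\frac{f_{sd}(1-p_q)\mu_p}{f_{sd}(1-p_q)+p_a f_{ps}(1-f_{pd})}$ and $\lambda_s<p_q f_{sd}(1-\lambda_p/\mu_p)$ with $\mu_p=f_{pd}+p_a f_{ps}(1-f_{pd})$. Then the average PU delay $D_p$ is monotonically decreasing in $p_a$ if $p_q<1-\frac{f_{pd}}{f_{sd}}$, monotonically increasing in $p_a$ if $p_q>1-\frac{f_{pd}}{f_{sd}}$ (and constant in $p_a$ if $p_q=1-\frac{f_{pd}}{f_{sd}}$), while the average SU delay $D_s$ is monotonically decreasing in $p_a$ for every $p_q\in(0,1)$.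
   Context: Constants $f_{pd},f_{ps},f_{sd}\in(0,1)$ with $f_{pd}<f_{sd}$. Set $a=p_a f_{ps}(1-f_{pd})$, $\mu_p=f_{pd}+a$. $D_p=(N_p+N_{sp})/\lambda_p$ and $D_s=N_s/\lambda_s$, where $N_p=\frac{\lambda_p-\lambda_p^2}{\mu_p-\lambda_p}$, $N_{sp}=\frac{m\lambda_p^2+n\lambda_p}{\alpha\lambda_p^2+\beta\lambda_p+\gamma}$, $N_s=\frac{\lambda_p\lambda_s A+(\lambda_s^2-\lambda_s)B(B+\lambda_p)}{BC}$ with $m=a\big[\frac{(1-p_q)f_{sd}-f_{pd}}{\mu_p}-(1-p_q)f_{sd}-a\big]$, $n=a\mu_p$, $\alpha=(1-p_q)f_{sd}+a$, $\beta=\mu_p[-2(1-p_q)f_{sd}-a]$, $\gamma=(1-p_q)f_{sd}\mu_p^2$, $A=p_q f_{sd}(\mu_p-1)$, $B=\mu_p-\lambda_p$, $C=(\lambda_s-p_q f_{sd})\mu_p+p_q f_{sd}\lambda_p$. These are the average packet delays of the PU and SU in a cognitive relaying system where the SU serves its own queue w.p. $p_q$ (relay queue w.p. $1-p_q$) when the PU is idle, and admits undelivered overheard PU packets to its relay queue w.p. $p_a$. *)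

(* Defs.v *)
From Stdlib Require Import Reals Lra.
Open Scope R_scope.

Definition a_ (fpd fps pa : R) : R := pa * fps * (1 - fpd).
Definition mu_p (fpd fps pa : R) : R := fpd + a_ fpd fps pa.

Definition N_p (fpd fps lp pa : R) : R :=
  (lp - lp ^ 2) / (mu_p fpd fps pa - lp).

Definition N_sp (fpd fps fsd lp pq pa : R) : R :=
  let a := a_ fpd fps pa in
  let mu := mu_p fpd fps pa in
  let m := a * (((1 - pq) * fsd - fpd) / mu - (1 - pq) * fsd - a) in
  let n := a * mu in
  let alpha := (1 - pq) * fsd + a in
  let beta := mu * (- 2 * (1 - pq) * fsd - a) in
  let gamma := (1 - pq) * fsd * mu ^ 2 in
  (m * lp ^ 2 + n * lp) / (alpha * lp ^ 2 + beta * lp + gamma).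

Definition N_s (fpd fps fsd lp ls pq pa : R) : R :=
  let mu := mu_p fpd fps pa in
  let A := pq * fsd * (mu - 1) in
  let B := mu - lp in
  let C := (ls - pq * fsd) * mu + pq * fsd * lp in
  (lp * ls * A + (ls ^ 2 - ls) * B * (B + lp)) / (B * C).

Definition D_p (fpd fps fsd lp pq pa : R) : R :=
  (N_p fpd fps lp pa + N_sp fpd fps fsd lp pq pa) / lp.
Definition D_s (fpd fps fsd lp ls pq pa : R) : R :=
  N_s fpd fps fsd lp ls pq pa / ls.

Definition admissible (fpd fps fsd lp ls pq pa : R) : Prop :=
  0 <= pa <= 1 /\
  lp < fsd * (1 - pq) * mu_p fpd fps pa / (fsd * (1 - pq) + a_ fpd fps pa) /\
  ls < pq * fsd * (1 - lp / mu_p fpd fps pa).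

(* Main.v *)
Require Import Defs.
From Stdlib Require Import Reals Lra Psatz.
Open Scope R_scope.

Definition NP f c l a := (1-l)*(f+a)^2*(f+a-l) + (c-f)*((1-l)*(f+a)*(f+a-l) + l*a*(1-(f+a))).
Definition DP f c l a := (f+a)*(f+a-l)*(c*(f+a)-(c+a)*l).
Definition H1 f l a1 a2 := (f+a2-l)*(f+a2)*((f-l)*l*(1-(f+a1)) - (1-l)*(f+a1-l)*(f+a1)).
Definition XX f l a1 a2 := H1 f l a1 a2 - l*(f+a1-l)*a2*((1-l)-(1-(f+a1))*(1-(f+a2))).

Lemma Dp_form fpd fps fsd lp pq pa :
  fpd + a_ fpd fps pa <> 0 -> fpd + a_ fpd fps pa - lp <> 0 ->
  (1-pq)*fsd*(fpd + a_ fpd fps pa) - ((1-pq)*fsd + a_ fpd fps pa)*lp <> 0 -> lp <> 0 ->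
  D_p fpd fps fsd lp pq pa =
  NP fpd ((1-pq)*fsd) lp (a_ fpd fps pa) / DP fpd ((1-pq)*fsd) lp (a_ fpd fps pa).
Proof.
  intros Hm Hu HK Hl.
  unfold D_p, N_p, N_sp, mu_p, NP, DP; cbv zeta.
  set (a := a_ fpd fps pa) in *.
  assert (Hd : (((1 - pq) * fsd + a) * lp ^ 2 + (fpd + a) * (- 2 * (1 - pq) * fsd - a) * lp +
     (1 - pq) * fsd * (fpd + a) ^ 2) = (fpd + a - lp)*((1-pq)*fsd*(fpd + a) - ((1-pq)*fsd + a)*lp)) by ring.
  rewrite Hd. clearbody a. field. tauto.
Qed.

Lemma Dp_diff f c l a1 a2 : f+a1 <> 0 -> f+a2 <> 0 -> f+a1-l <> 0 -> f+a2-l <> 0 ->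
  c*(f+a1)-(c+a1)*l <> 0 -> c*(f+a2)-(c+a2)*l <> 0 ->
  NP f c l a2 / DP f c l a2 - NP f c l a1 / DP f c l a1 =
  (a2-a1)*(c-f)*((c*(f+a1)-(c+a1)*l)*XX f l a1 a2 + l*a1*H1 f l a1 a2)
   / (DP f c l a1 * DP f c l a2 * (f+a1-l)).
Proof.
  intros.
  unfold NP, XX, H1, DP. field. tauto.
Qed.

Lemma Ds_diff fpd fps fsd lp ls pq pa1 pa2 :
  let m1 := mu_p fpd fps pa1 in let m2 := mu_p fpd fps pa2 in m1 - lp <> 0 -> m2 - lp <> 0 ->
  (ls - pq*fsd)*m1 + pq*fsd*lp <> 0 -> (ls - pq*fsd)*m2 + pq*fsd*lp <> 0 -> ls <> 0 ->
  D_s fpd fps fsd lp ls pq pa2 - D_s fpd fps fsd lp ls pq pa1 =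
  (m2 - m1) * (pq*fsd*lp*(-(1-pq*fsd)*(m1-lp)*(m2-lp) - (1-lp)*(pq*fsd*((m1-lp)+(m2-lp)) - ls*((m1-lp)+(m2-lp)+lp))))
  / ((m1-lp)*(m2-lp)*((ls - pq*fsd)*m1 + pq*fsd*lp)*((ls - pq*fsd)*m2 + pq*fsd*lp)).
Proof.
  intros m1 m2; intros. unfold D_s, N_s; cbv zeta. fold m1 m2. clearbody m1 m2. field. tauto.
Qed.

Lemma H1_neg f l a1 a2 : 0<l<1 -> 0<=a1 -> 0<=a2 -> f+a1<1 -> f+a2<1 ->
  0<f+a1-l -> 0<f+a2-l -> H1 f l a1 a2 < 0.
Proof.
  intros Hl Ha1 Ha2 Hb1 Hb2 Hu1 Hu2. unfold H1.
  assert (Hin : (f-l)*l*(1-(f+a1)) - (1-l)*(f+a1-l)*(f+a1) < 0).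
  { destruct (Rle_or_lt (f-l) 0) as [Hg|Hg].
    - assert (0 <= -(f-l)*l*(1-(f+a1))) by (apply Rmult_le_pos; [apply Rmult_le_pos|]; lra).
      assert (0 < (1-l)*(f+a1-l)*(f+a1)) by (apply Rmult_lt_0_compat; [apply Rmult_lt_0_compat|]; lra).
      lra.
    - assert (E1 : (f-l)*(l*(1-(f+a1))) <= (f+a1-l)*(l*(1-(f+a1))))
        by (apply Rmult_le_compat_r; [apply Rmult_le_pos|]; lra).
      assert (E2 : (f+a1-l)*(l*(1-(f+a1))) < (f+a1-l)*((1-l)*(f+a1)))
        by (apply Rmult_lt_compat_l; nra).
      nra. }
  assert (0 < (f+a2-l)*(f+a2)) by (apply Rmult_lt_0_compat; lra).
  nra.
Qed.

Lemma F_neg f c l a1 a2 : 0<l<1 -> 0<=a1 -> 0<=a2 -> f+a1<1 -> f+a2<1 ->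
  0<f+a1-l -> 0<f+a2-l -> 0 < c*(f+a1)-(c+a1)*l ->
  (c*(f+a1)-(c+a1)*l)*XX f l a1 a2 + l*a1*H1 f l a1 a2 < 0.
Proof.
  intros Hl Ha1 Ha2 Hb1 Hb2 Hu1 Hu2 HK.
  pose proof (H1_neg f l a1 a2 Hl Ha1 Ha2 Hb1 Hb2 Hu1 Hu2) as HH.
  assert (HR : 0 <= l*(f+a1-l)*a2*((1-l)-(1-(f+a1))*(1-(f+a2)))).
  { apply Rmult_le_pos; [apply Rmult_le_pos; [apply Rmult_le_pos|]|]; try lra.
    assert ((1-(f+a1))*(1-(f+a2)) <= (1-l)*(1-l)) by (apply Rmult_le_compat; lra). nra. }
  assert (HX : XX f l a1 a2 < 0) by (unfold XX; lra).
  assert (0 <= l*a1) by (apply Rmult_le_pos; lra).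
  assert (l*a1*H1 f l a1 a2 <= 0) by nra.
  assert ((c*(f+a1)-(c+a1)*l)*XX f l a1 a2 < 0) by nra.
  lra.
Qed.

Lemma adm_facts fpd fps fsd lp ls pq pa :
  0 < fpd < 1 -> 0 < fps < 1 -> 0 < fsd < 1 -> 0 < lp < 1 -> 0 < ls < 1 -> 0 < pq < 1 ->
  admissible fpd fps fsd lp ls pq pa ->
  0 <= a_ fpd fps pa /\ fpd + a_ fpd fps pa < 1 /\ 0 < fpd + a_ fpd fps pa - lp /\
  0 < (1-pq)*fsd*(fpd + a_ fpd fps pa) - ((1-pq)*fsd + a_ fpd fps pa)*lp /\
  (ls - pq*fsd)*mu_p fpd fps pa + pq*fsd*lp < 0.
Proof.
  intros Hf Hp Hs Hl Hls Hq [Hpa [H1 H2]].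
  unfold mu_p in *. set (a := a_ fpd fps pa) in *.
  assert (Ha0 : 0 <= a) by (unfold a, a_; apply Rmult_le_pos; [apply Rmult_le_pos|]; lra).
  assert (Ha1 : a <= fps*(1-fpd)) by (unfold a, a_; assert (0 <= fps*(1-fpd)) by (apply Rmult_le_pos; lra); nra).
  assert (Ha2 : a < 1 - fpd) by nra.
  assert (Hc : 0 < (1-pq)*fsd) by (apply Rmult_lt_0_compat; lra).
  assert (Hden : 0 < fsd*(1-pq) + a) by nra.
  assert (HK : lp*(fsd*(1-pq) + a) < fsd*(1-pq)*(fpd+a)).
  { apply Rmult_lt_compat_r with (r := fsd*(1-pq)+a) in H1; [|lra].
    replace (fsd * (1 - pq) * (fpd + a) / (fsd * (1 - pq) + a) * (fsd * (1 - pq) + a))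
      with (fsd * (1 - pq) * (fpd + a)) in H1 by (field; lra). lra. }
  assert (Hu : 0 < fpd + a - lp) by nra.
  assert (HC : ls*(fpd+a) < pq*fsd*(fpd+a-lp)).
  { apply Rmult_lt_compat_r with (r := fpd+a) in H2; [|lra].
    replace (pq * fsd * (1 - lp / (fpd + a)) * (fpd + a)) with (pq*fsd*(fpd+a-lp)) in H2
      by (field; lra). lra. }
  repeat split; try lra; nra.
Qed.

Theorem lemma4 (fpd fps fsd lp ls pq : R)
  (hfpd : 0 < fpd < 1) (hfps : 0 < fps < 1) (hfsd : 0 < fsd < 1)
  (hlt : fpd < fsd)
  (hlp : 0 < lp < 1) (hls : 0 < ls < 1) (hpq : 0 < pq < 1) :
  (pq < 1 - fpd / fsd ->
     forall pa1 pa2, admissible fpd fps fsd lp ls pq pa1 ->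
       admissible fpd fps fsd lp ls pq pa2 -> pa1 < pa2 ->
       D_p fpd fps fsd lp pq pa2 < D_p fpd fps fsd lp pq pa1) /\
  (pq > 1 - fpd / fsd ->
     forall pa1 pa2, admissible fpd fps fsd lp ls pq pa1 ->
       admissible fpd fps fsd lp ls pq pa2 -> pa1 < pa2 ->
       D_p fpd fps fsd lp pq pa1 < D_p fpd fps fsd lp pq pa2) /\
  (pq = 1 - fpd / fsd ->
     forall pa1 pa2, admissible fpd fps fsd lp ls pq pa1 ->
       admissible fpd fps fsd lp ls pq pa2 ->
       D_p fpd fps fsd lp pq pa1 = D_p fpd fps fsd lp pq pa2) /\
  (forall pa1 pa2, admissible fpd fps fsd lp ls pq pa1 ->
       admissible fpd fps fsd lp ls pq pa2 -> pa1 < pa2 ->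
       D_s fpd fps fsd lp ls pq pa2 < D_s fpd fps fsd lp ls pq pa1).
Proof.
  assert (Hd : forall pq', (pq' < 1 - fpd/fsd <-> 0 < (1-pq')*fsd - fpd) /\
                           (pq' > 1 - fpd/fsd <-> (1-pq')*fsd - fpd < 0) /\
                           (pq' = 1 - fpd/fsd -> (1-pq')*fsd - fpd = 0)).
  { intro q. assert (E : (1-q)*fsd - fpd = fsd*((1 - fpd/fsd) - q)) by (field; lra).
    rewrite E. split; [|split].
    - split; intro; [apply Rmult_lt_0_compat; lra|].
      apply (Rmult_lt_reg_l fsd); lra.
    - split; intro; [|apply (Rmult_lt_reg_l fsd); lra].
      assert (0 < fsd*(q - (1 - fpd/fsd))) by (apply Rmult_lt_0_compat; lra). lra.
    - intro; subst q; ring. }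
  assert (Key : forall pa1 pa2, admissible fpd fps fsd lp ls pq pa1 ->
       admissible fpd fps fsd lp ls pq pa2 ->
       exists N D, N < 0 /\ 0 < D /\
       D_p fpd fps fsd lp pq pa2 - D_p fpd fps fsd lp pq pa1 =
       (a_ fpd fps pa2 - a_ fpd fps pa1) * ((1-pq)*fsd - fpd) * N / D).
  { intros pa1 pa2 A1 A2.
    destruct (adm_facts _ _ _ _ _ _ _ hfpd hfps hfsd hlp hls hpq A1) as (a10 & b1 & u1 & K1 & _).
    destruct (adm_facts _ _ _ _ _ _ _ hfpd hfps hfsd hlp hls hpq A2) as (a20 & b2 & u2 & K2 & _).
    set (a1 := a_ fpd fps pa1) in *. set (a2 := a_ fpd fps pa2) in *.
    set (c := (1-pq)*fsd) in *.
    assert (Hc : 0 < c) by (apply Rmult_lt_0_compat; lra).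
    rewrite (Dp_form fpd fps fsd lp pq pa1), (Dp_form fpd fps fsd lp pq pa2); try lra.
    fold a1 a2 c.
    rewrite Dp_diff; try lra.
    exists ((c*(fpd+a1)-(c+a1)*lp)*XX fpd lp a1 a2 + lp*a1*H1 fpd lp a1 a2).
    exists (DP fpd c lp a1 * DP fpd c lp a2 * (fpd+a1-lp)).
    split; [apply F_neg; lra|]. split; [|reflexivity].
    unfold DP.
    assert (0 < fpd + a1) by lra. assert (0 < fpd + a2) by lra.
    repeat apply Rmult_lt_0_compat; lra.  all: try (apply Rgt_not_eq || apply Rlt_not_eq); fold a1 a2 c; lra. }
  assert (Hmono : forall pa1 pa2, pa1 < pa2 -> a_ fpd fps pa1 < a_ fpd fps pa2).
  { intros p1 p2 H. unfold a_. assert (0 < fps*(1-fpd)) by (apply Rmult_lt_0_compat; lra). nra. }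
  split; [|split; [|split]].
  - intros Hq pa1 pa2 A1 A2 Hlt.
    destruct (Key pa1 pa2 A1 A2) as (N & D & HN & HD & E).
    apply (proj1 (proj1 (Hd pq))) in Hq. specialize (Hmono _ _ Hlt).
    assert (E2 : (a_ fpd fps pa2 - a_ fpd fps pa1) * ((1-pq)*fsd - fpd) * N / D < 0).
    { unfold Rdiv. apply Rmult_neg_pos; [|apply Rinv_0_lt_compat; lra].
      assert (0 < (a_ fpd fps pa2 - a_ fpd fps pa1) * ((1-pq)*fsd - fpd)) by (apply Rmult_lt_0_compat; lra).
      nra. }
    lra.
  - intros Hq pa1 pa2 A1 A2 Hlt.
    destruct (Key pa1 pa2 A1 A2) as (N & D & HN & HD & E).
    apply (proj1 (proj1 (proj2 (Hd pq)))) in Hq. specialize (Hmono _ _ Hlt).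
    assert (E2 : 0 < (a_ fpd fps pa2 - a_ fpd fps pa1) * ((1-pq)*fsd - fpd) * N / D).
    { unfold Rdiv. apply Rmult_lt_0_compat; [|apply Rinv_0_lt_compat; lra].
      assert ((a_ fpd fps pa2 - a_ fpd fps pa1) * ((1-pq)*fsd - fpd) < 0) by nra.
      nra. }
    lra.
  - intros Hq pa1 pa2 A1 A2.
    destruct (Key pa1 pa2 A1 A2) as (N & D & HN & HD & E).
    apply (proj2 (proj2 (Hd pq))) in Hq. rewrite Hq in E.
    assert (E3 : (a_ fpd fps pa2 - a_ fpd fps pa1) * 0 * N / D = 0) by (unfold Rdiv; ring).
    lra.
  - intros pa1 pa2 A1 A2 Hlt.
    destruct (adm_facts _ _ _ _ _ _ _ hfpd hfps hfsd hlp hls hpq A1) as (a10 & b1 & u1 & K1 & C1).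
    destruct (adm_facts _ _ _ _ _ _ _ hfpd hfps hfsd hlp hls hpq A2) as (a20 & b2 & u2 & K2 & C2).
    specialize (Hmono _ _ Hlt).
    unfold mu_p in *.
    set (a1 := a_ fpd fps pa1) in *. set (a2 := a_ fpd fps pa2) in *.
    assert (HD := Ds_diff fpd fps fsd lp ls pq pa1 pa2). cbv zeta in HD. unfold mu_p in HD.
    fold a1 a2 in HD.
    apply Rminus_lt. rewrite HD by lra.
    set (P := pq*fsd) in *.
    assert (HP : 0 < P < 1) by (unfold P; split; [apply Rmult_lt_0_compat|]; nra).
    set (m1 := fpd + a1) in *. set (m2 := fpd + a2) in *.
    assert (Q1 : ls*(m1-lp+lp) < P*(m1-lp)) by nra.
    assert (Q2 : ls*(m2-lp+lp) < P*(m2-lp)) by nra.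
    assert (HQ : pq*fsd*lp*(-(1-P)*(m1-lp)*(m2-lp) - (1-lp)*(P*((m1-lp)+(m2-lp)) - ls*((m1-lp)+(m2-lp)+lp))) < 0).
    { fold P. assert (0 < (1-P)*(m1-lp)*(m2-lp)) by (repeat apply Rmult_lt_0_compat; lra).
      assert (0 < (1-lp)*(P*((m1-lp)+(m2-lp)) - ls*((m1-lp)+(m2-lp)+lp))) by (apply Rmult_lt_0_compat; nra).
      assert (0 < P*lp) by (apply Rmult_lt_0_compat; lra).
      fold P. nra. }
    fold P in HQ.
    assert (0 < (m1-lp)*(m2-lp)*((ls - P)*m1 + P*lp)*((ls - P)*m2 + P*lp)).
    { assert (0 < (m1-lp)*(m2-lp)) by (apply Rmult_lt_0_compat; lra).
      assert (0 < ((ls - P)*m1 + P*lp)*((ls - P)*m2 + P*lp)) by nra.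
      nra. }
    unfold Rdiv. apply Rmult_neg_pos; [|apply Rinv_0_lt_compat; lra].
    assert (0 < m2 - m1) by (unfold m1, m2; lra). nra.
Qed.
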